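(* Let $M$ be a compact Riemannian manifold with Riemannian volume measure $\operatorname{Leb}$, let $f\colon M\to M$ be a $C^\infty$ map, and let $(U_n)_{n\ge1}$ be a concatenated collection (see context). If $$\sum_{n\ge1}\sum_{j=0}^{n-1}\operatorname{Leb}\big(f^j(u^{-1}(n))\big)<\infty,$$ then for $\operatorname{Leb}$-almost every $x\in M$, $$\sup\Big\{u(y)\colon y\in \bigcup_{n\ge1}U_n \text{ and } x\in C(y)\Big\}<\infty.$$
   Context: A collection $(U_n)_{n\ge1}$ of measurable subsets of $M$ whose union has full Lebesgue measure is called a concatenated collection if for all $n,m\ge1$: $x\in U_n$ and $f^n(x)\in U_m$ imply $x\in U_{n+m}$. For $x\in\bigcup_{n\ge1}U_n$, $u(x)$ is the minimum $n\in\mathbb N$ with $x\in U_n$, and $u^{-1}(n)=\{x\in\bigcup_k U_k\colon u(x)=n\}$. The chain generated by $x\in\bigcup_{n\ge1}U_n$ is $C(x)=\{x,f(x),\dots,f^{u(x)-1}(x)\}$. *)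

(* Defs.v *)
From HB Require Import structures.
From mathcomp Require Import all_boot all_order all_algebra.
From mathcomp Require Import all_classical all_reals all_analysis.
Set Implicit Arguments. Unset Strict Implicit. Unset Printing Implicit Defensive.
Import Order.TTheory GRing.Theory Num.Theory.
Local Open Scope classical_set_scope.

Section Concat.
Context {T : Type}.

Definition Ubig (U : nat -> set T) : set T := [set x | exists n, (0 < n)%N /\ U n x].

(* concatenated collection (measurability / full-measure conditions are stated in the theorem) *)
Definition concatenated (f : T -> T) (U : nat -> set T) : Prop :=
  forall (n m : nat) (x : T), (0 < n)%N -> (0 < m)%N ->
    U n x -> U m (iter n f x) -> U (n + m) x.

(* u(x) = min { n >= 1 | x in U_n } for x in the union (value 0 outside, irrelevant) *)
Definition u (U : nat -> set T) (x : T) : nat :=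
  match pselect (exists n, (0 < n)%N && `[< U n x >]) with
  | left h => ex_minn h
  | right _ => 0%N
  end.

Definition uinv (U : nat -> set T) (n : nat) : set T := [set x | Ubig U x /\ u U x = n].

Definition chain (f : T -> T) (U : nat -> set T) (y : T) : set T :=
  [set iter j f y | j in [set j : nat | (j < u U y)%N]].

End Concat.

(* Main.v *)
Require Import Defs.
From HB Require Import structures.
From mathcomp Require Import all_boot all_order all_algebra.
From mathcomp Require Import all_classical all_reals all_analysis.
Import Order.TTheory GRing.Theory Num.Theory.
Local Open Scope classical_set_scope.
Local Open Scope ring_scope.
Local Open Scope ereal_scope.

Theorem lemma1 (d : measure_display) (M : measurableType d) (R : realType)
  (Leb : {measure set M -> \bar R}) (f : M -> M) (U : nat -> set M) :
  measurable_fun setT f ->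
  (forall n, (0 < n)%N -> measurable (U n)) ->
  Leb.-negligible (~` Ubig U) ->
  concatenated f U ->
  (forall n j, (0 < n)%N -> (j < n)%N -> measurable (iter j f @` uinv U n)) ->
  \sum_(1 <= n <oo) (\sum_(0 <= j < n) Leb (iter j f @` uinv U n)) < +oo ->
  {ae Leb, forall x : M, exists B : nat,
      forall y, Ubig U y -> chain f U y x -> (u U y <= B)%N}.
Proof.
move=> _ _ _ _ mA Hsum.
pose F n := \big[setU/set0]_(j < n) (iter j f @` uinv U n).
have mF : forall n, measurable (F n).
  move=> n; apply: bigsetU_measurable => j _; apply: mA => //.
  by apply: leq_ltn_trans (ltn_ord j).
have g0 : forall n, 0 <= \sum_(0 <= j < n) Leb (iter j f @` uinv U n).
  by move=> n; apply: sume_ge0 => j _; exact: measure_ge0.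
have HF : Leb (lim_sup_set F) = 0.
  apply: lim_sup_set_cvg0 => //.
  apply: le_lt_trans Hsum.
  rewrite (nneseries_split 0 1) //= add0n big_nat1 /F big_ord0 measure0 add0e.
  apply: lee_nneseries => n _; first by move=> _; exact: measure_ge0.
  rewrite big_mkord.
  have := @Boole_inequality _ _ _ Leb (fun j => iter j f @` uinv U n) n.
  by apply => j jn; apply: mA => //; apply: leq_ltn_trans (leq0n j) jn.
rewrite /almost_everywhere /=.
exists (lim_sup_set F); split => //.
  by apply: bigcap_measurable => // k _; exact: bigcup_measurable.
move=> x /= Hx N _.
have [y [Uy cy Hy]] : exists y, [/\ Ubig U y, chain f U y x & (N < u U y)%N].
  apply: contrapT => H; apply: Hx; exists N => y Uy cy.
  rewrite leqNgt; apply/negP => Hl; apply: H; by exists y.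
exists (u U y) => //=; first exact: ltnW.
case: cy => j /= ju <-.
rewrite /F -(bigcup_mkord _ (fun j => iter j f @` uinv U (u U y))); exists j => //.
by exists y.
Qed.
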